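(* Let $d,\tilde d\in\mathbb{R}^m$ with $d,\tilde d>0$ and $\ell,\tilde\ell\in\mathbb{R}^m$ with $f(d,\ell)>0$ and $f(\tilde d,\tilde\ell)>0$. Let $j\in\{1,\dots,m\}$ and suppose $$\frac{1}{f(\tilde d,\tilde\ell)}\tilde d=\alpha\Big(\frac{1}{f(d,\ell)}d+\frac{2}{m-1}\frac{1}{\gamma_j(d,\ell)^2}e_j\Big)$$ for some scalar $\alpha\ge\frac{m^2-1}{m^2}$. Then $\mathrm{vol}\,E(\tilde d,\tilde\ell)\le e^{-\frac{1}{2(m+1)}}\mathrm{vol}\,E(d,\ell)$.
   Context: Standing assumption: $A=[a_1|\cdots|a_m]\in\mathbb{R}^{n\times m}$ has columns of unit Euclidean norm and $\{A\lambda:\lambda\ge0\}=\mathbb{R}^n$ (so $m>n\ge1$); $u\in\mathbb{R}^m$. $D=\mathrm{diag}(d)$; $r(\ell)=\tfrac12(u+\ell)$, $v(\ell)=\tfrac12(u-\ell)$, $B(d)=ADA^\top$, $y(d,\ell)=B(d)^{-1}ADr(\ell)$, $t(d,\ell)=A^\top y(d,\ell)-r(\ell)$, $f(d,\ell)=v(\ell)^\top Dv(\ell)-t(d,\ell)^\top Dt(d,\ell)$, $\gamma_i(d,\ell)=\sqrt{f(d,\ell)a_i^\top B(d)^{-1}a_i}$. $E(d,\ell)=\{x:(A^\top x-\ell)^\top D(A^\top x-u)\le0\}$, and its (relative) volume is defined as $\mathrm{vol}\,E(d,\ell):=f(d,\ell)^{n/2}/\sqrt{\det(ADA^\top)}$.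 *)

(* Defs.v *)
From HB Require Import structures.
From Stdlib Require Import Reals Lra ClassicalEpsilon FunctionalExtensionality.
From mathcomp Require Import all_boot all_order all_algebra.

Set Implicit Arguments.
Unset Strict Implicit.
Unset Printing Implicit Defensive.

Definition Req_bool (x y : R) : bool := if Req_EM_T x y then true else false.

Lemma Req_boolP : Equality.axiom Req_bool.
Proof. move=> x y; rewrite /Req_bool; case: Req_EM_T => h; by constructor. Qed.

HB.instance Definition _ := hasDecEq.Build R Req_boolP.

Definition R_find (P : pred R) (n : nat) : option R :=
  match excluded_middle_informative (exists x, P x) with
  | left h => Some (proj1_sig (constructive_indefinite_description _ h))
  | right _ => None
  end.

Lemma R_find_correct P n x : R_find P n = Some x -> P x.
Proof.
rewrite /R_find; case: excluded_middle_informative => // h [<-].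
exact: proj2_sig (constructive_indefinite_description _ h).
Qed.

Lemma R_find_complete (P : pred R) : (exists x, P x) -> exists n, R_find P n.
Proof. move=> h; exists 0%N; rewrite /R_find; by case: excluded_middle_informative. Qed.

Lemma R_find_ext (P Q : pred R) : P =1 Q -> R_find P =1 R_find Q.
Proof. move=> h n; have -> : P = Q by apply: functional_extensionality. by []. Qed.

HB.instance Definition _ :=
  hasChoice.Build R R_find_correct R_find_complete R_find_ext.

Lemma R_addA : forall x y z : R, Rplus x (Rplus y z) = Rplus (Rplus x y) z. Proof. move=> *; lra. Qed.
Lemma R_addC : forall x y : R, Rplus x y = Rplus y x. Proof. move=> *; lra. Qed.
Lemma R_add0 : forall x : R, Rplus R0 x = x. Proof. move=> *; lra. Qed.
Lemma R_addN : forall x : R, Rplus (Ropp x) x = R0. Proof. move=> *; lra. Qed.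

HB.instance Definition _ := GRing.isZmodule.Build R R_addA R_addC R_add0 R_addN.

Lemma R_mulA : forall x y z : R, Rmult x (Rmult y z) = Rmult (Rmult x y) z. Proof. move=> *; ring. Qed.
Lemma R_mulC : forall x y : R, Rmult x y = Rmult y x. Proof. move=> *; ring. Qed.
Lemma R_mul1 : forall x : R, Rmult R1 x = x. Proof. move=> *; ring. Qed.
Lemma R_mulDl : forall x y z : R, Rmult (Rplus x y) z = Rplus (Rmult x z) (Rmult y z).
Proof. move=> *; ring. Qed.
Lemma R_one_neq0 : R1 != R0.
Proof. by apply/eqP; exact: R1_neq_R0. Qed.

HB.instance Definition _ :=
  GRing.Zmodule_isComNzRing.Build R R_mulA R_mulC R_mul1 R_mulDl R_one_neq0.

Lemma R_mulVf (x : R) : x != R0 -> Rmult (Rinv x) x = R1.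
Proof. by move/eqP=> h; field. Qed.
Lemma R_inv0 : Rinv R0 = R0. Proof. exact: Rinv_0. Qed.

HB.instance Definition _ := GRing.ComNzRing_isField.Build R R_mulVf R_inv0.

Local Open Scope ring_scope.

Section Ellipsoid.
Variables (n m : nat) (A : 'M[R]_(n, m)) (u : 'cV[R]_m).

Definition Dm (d : 'cV[R]_m) : 'M[R]_m := diag_mx d^T.
Definition rr (l : 'cV[R]_m) : 'cV[R]_m := 2^-1 *: (u + l).
Definition vv (l : 'cV[R]_m) : 'cV[R]_m := 2^-1 *: (u - l).
Definition Bm (d : 'cV[R]_m) : 'M[R]_n := A *m Dm d *m A^T.
Definition yy (d l : 'cV[R]_m) : 'cV[R]_n := invmx (Bm d) *m A *m Dm d *m rr l.
Definition tt (d l : 'cV[R]_m) : 'cV[R]_m := A^T *m yy d l - rr l.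
Definition ff (d l : 'cV[R]_m) : R :=
  ((vv l)^T *m Dm d *m vv l) 0 0 - ((tt d l)^T *m Dm d *m tt d l) 0 0.
Definition gam (d l : 'cV[R]_m) (i : 'I_m) : R :=
  sqrt (ff d l * ((col i A)^T *m invmx (Bm d) *m col i A) 0 0).
Definition volE (d l : 'cV[R]_m) : R :=
  (Rpower (ff d l) (INR n / 2) / sqrt (\det (Bm d)))%R.

End Ellipsoid.

(* Main.v *)
Require Import Defs.
From HB Require Import structures.
From Stdlib Require Import Reals.
From Stdlib Require Import Lra Lia Classical.

Local Open Scope R_scope.

Lemma bern (a : R) (k : nat) : 0 <= a -> a <= 1 -> 1 - INR k * (1 - a) <= a ^ k.
Proof.
intros H0 H1; induction k as [|k IH]; [simpl; lra|].
change (a ^ S k) with (a * a ^ k); rewrite S_INR.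
assert (0 <= INR k) by apply pos_INR.
assert (h1 : a * (1 - INR k * (1 - a)) <= a * a ^ k) by (apply Rmult_le_compat_l; lra).
assert (h2 : 0 <= INR k * ((1 - a) * (1 - a))) by (apply Rmult_le_pos; nra).
nra.
Qed.

Lemma Rpower_half (x : R) (n : nat) : 0 < x -> Rpower x (INR n / 2) = sqrt (x ^ n).
Proof.
intros hx.
assert (h : Rpower x (INR n / 2) * Rpower x (INR n / 2) = x ^ n).
{ rewrite <- Rpower_plus. replace (INR n / 2 + INR n / 2) with (INR n) by field.
  apply Rpower_pow; exact hx. }
rewrite <- h. rewrite sqrt_square; [reflexivity|].
unfold Rpower; left; apply exp_pos.
Qed.

Lemma P_bound (n m : nat) (alpha : R) : Peano.lt 0 n -> Peano.lt n m ->
  (INR m ^ 2 - 1) / INR m ^ 2 <= alpha ->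
  exp (/ (INR m + 1)) <= alpha ^ n * (1 + 2 / (INR m - 1)).
Proof.
intros Hn Hnm Ha.
assert (Hm : 2 <= INR m).
{ replace 2 with (INR 2) by (simpl; lra). apply le_INR; lia. }
set (M := INR m) in *.
set (a0 := (M ^ 2 - 1) / M ^ 2) in *.
assert (Ha0 : a0 = 1 - / M^2) by (unfold a0; field; lra).
assert (HM2 : 0 < / M ^ 2) by (apply Rinv_0_lt_compat; nra).
assert (HM2' : / M ^ 2 <= 1/4).
{ unfold Rdiv; rewrite Rmult_1_l. apply Rinv_le_contravar; nra. }
assert (a0pos : 0 <= a0) by lra.
assert (a0le : a0 <= 1) by lra.
assert (h1 : a0 ^ n <= alpha ^ n) by (apply pow_incr; split; lra).
assert (h2 : a0 ^ (m - 1) <= a0 ^ n).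
{ replace (m - 1)%nat with (n + (m - 1 - n))%nat by lia.
  rewrite pow_add.
  assert (0 <= a0 ^ n) by (apply pow_le; lra).
  assert (a0 ^ (m - 1 - n) <= 1).
  { rewrite <- (pow1 (m - 1 - n)). apply pow_incr; split; lra. }
  rewrite <- (Rmult_1_r (a0 ^ n)) at 2. apply Rmult_le_compat_l; lra. }
assert (h3 := bern a0 (m - 1) a0pos a0le).
rewrite minus_INR in h3 by lia. simpl INR in h3. fold M in h3.
assert (hb : (M + 1) / M <= alpha ^ n * (1 + 2 / (M - 1))).
{ assert (hK : 0 < 1 + 2 / (M - 1)).
  { assert (0 < 2 / (M - 1)) by (apply Rdiv_lt_0_compat; lra). lra. }
  apply Rle_trans with ((1 - (M - 1) * (1 - a0)) * (1 + 2 / (M - 1))).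
  2: { apply Rmult_le_compat_r; lra. }
  rewrite Ha0.
  replace ((1 - (M - 1) * (1 - (1 - / M ^ 2))) * (1 + 2 / (M - 1)))
    with ((M^3 + 1) / (M^2 * (M - 1))) by (field; lra).
  apply Rmult_le_reg_r with (M^2 * (M-1) * M); [nra|].
  replace ((M + 1) / M * (M ^ 2 * (M - 1) * M)) with ((M+1) * (M^2 * (M-1))) by (field; lra).
  replace ((M ^ 3 + 1) / (M ^ 2 * (M - 1)) * (M ^ 2 * (M - 1) * M)) with ((M^3+1)*M) by (field; nra).
  nra. }
apply Rle_trans with ((M + 1) / M); [|exact hb].
assert (he := exp_ineq1_le (- / (M + 1))).
rewrite exp_Ropp in he.
assert (hp : 0 < exp (/ (M + 1))) by apply exp_pos.
assert (hx : 1 + - / (M + 1) = M / (M + 1)) by (field; lra).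
rewrite hx in he.
replace ((M + 1) / M) with (/ (M / (M + 1))) by (field; lra).
replace (exp (/ (M + 1))) with (/ / exp (/ (M + 1))) by (field; lra).
apply Rinv_le_contravar; [|exact he].
apply Rdiv_lt_0_compat; lra.
Qed.

Lemma final_real (n m : nat) (alpha f ft dB dBt : R) : Peano.lt 0 n -> Peano.lt n m ->
  (INR m ^ 2 - 1) / INR m ^ 2 <= alpha -> 0 < f -> 0 < ft ->
  dBt = (ft * alpha) ^ n * (/ f) ^ n * ((INR m + R1) / (INR m - R1)) * dB ->
  Rpower ft (INR n / 2) / sqrt dBt <=
  exp (- / (2 * (INR m + 1))) * (Rpower f (INR n / 2) / sqrt dB).
Proof.
intros Hn Hnm Ha Hf Hft Heq.
assert (Hm : 2 <= INR m).
{ replace 2 with (INR 2) by (simpl; lra). apply le_INR; lia. }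
replace ((INR m + R1) / (INR m - R1)) with (1 + 2 / (INR m - 1)) in Heq by (field; lra).
subst dBt.
assert (HP := P_bound n m alpha Hn Hnm Ha).
set (K := 1 + 2 / (INR m - 1)) in *.
assert (hal : 0 < alpha).
{ apply Rlt_le_trans with (2 := Ha). apply Rdiv_lt_0_compat; nra. }
set (P := alpha ^ n * K) in *.
assert (hPpos : 0 < P) by (apply Rlt_le_trans with (2 := HP); apply exp_pos).
rewrite !Rpower_half by assumption.
replace ((ft * alpha) ^ n * (/ f) ^ n * K * dB) with ((ft ^ n * P / f ^ n) * dB)
  by (unfold P; rewrite Rpow_mult_distr, pow_inv; field; apply pow_nonzero; lra).
assert (hfn : 0 < f ^ n) by (apply pow_lt; lra).
assert (hftn : 0 < ft ^ n) by (apply pow_lt; lra).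
rewrite sqrt_mult_alt by (apply Rlt_le, Rdiv_lt_0_compat; [apply Rmult_lt_0_compat|]; lra).
rewrite sqrt_div_alt by lra.
rewrite sqrt_mult_alt by lra.
assert (s1 : 0 < sqrt (ft ^ n)) by (apply sqrt_lt_R0; lra).
assert (s2 : 0 < sqrt (f ^ n)) by (apply sqrt_lt_R0; lra).
assert (s3 : 0 < sqrt P) by (apply sqrt_lt_R0; lra).
assert (hsd := sqrt_pos dB).
destruct (Req_dec (sqrt dB) 0) as [h0|h0].
{ rewrite h0, !Rmult_0_r. unfold Rdiv. rewrite Rinv_0, !Rmult_0_r. lra. }
assert (hse : exp (/ (2 * (INR m + 1))) <= sqrt P).
{ rewrite <- (sqrt_square (exp (/ (2 * (INR m + 1))))) by (left; apply exp_pos).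
  apply sqrt_le_1_alt. rewrite <- exp_plus.
  replace (/ (2 * (INR m + 1)) + / (2 * (INR m + 1))) with (/ (INR m + 1)) by (field; lra).
  exact HP. }
rewrite exp_Ropp.
assert (he : 0 < exp (/ (2 * (INR m + 1)))) by apply exp_pos.
replace (sqrt (ft ^ n) / (sqrt (ft ^ n) * sqrt P / sqrt (f ^ n) * sqrt dB))
  with (/ sqrt P * (sqrt (f ^ n) / sqrt dB)) by (field; lra).
apply Rmult_le_compat_r.
{ apply Rlt_le, Rdiv_lt_0_compat; lra. }
apply Rinv_le_contravar; lra.
Qed.

From mathcomp Require Import all_boot all_order all_algebra.
From mathcomp Require Import ring.
Import GRing.Theory.
Local Open Scope ring_scope.
Lemma addRE (x y : R) : x + y = Rplus x y. Proof. reflexivity. Qed.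
Lemma mulRE (x y : R) : x * y = Rmult x y. Proof. reflexivity. Qed.
Lemma oppRE (x : R) : - x = Ropp x. Proof. reflexivity. Qed.
Lemma invRE (x : R) : x^-1 = Rinv x. Proof. reflexivity. Qed.
Lemma zeroRE : (0 : R) = R0. Proof. reflexivity. Qed.
Lemma oneRE : (1 : R) = R1. Proof. reflexivity. Qed.

Lemma sumR_ge0 (I : finType) (P : pred I) (F : I -> R) :
  (forall i, Rle 0 (F i)) -> Rle 0 (\sum_(i | P i) F i).
Proof.
move=> h; apply: (big_ind (fun x => Rle 0 x)) => //.
- exact: Rle_refl.
- move=> x y; rewrite addRE zeroRE; lra.
Qed.

Lemma sumR_ge_term (I : finType) (F : I -> R) k :
  (forall i, Rle 0 (F i)) -> Rle (F k) (\sum_i F i).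
Proof.
move=> h; rewrite (bigD1 k) //= addRE.
rewrite -{1}(Rplus_0_r (F k)); apply: Rplus_le_compat_l; exact: (@sumR_ge0 _ (fun i => i != k) F h).
Qed.

Lemma qf_diag (k : nat) (w : 'rV[R]_k) (d : 'cV[R]_k) :
  (w *m diag_mx d^T *m w^T) 0 0 = \sum_i (w 0 i * d i 0 * w 0 i).
Proof.
rewrite mul_mx_diag mxE; apply: eq_bigr => i _; rewrite !mxE //.
Qed.

Lemma vvT (k : nat) (v : 'rV[R]_k) : (v *m v^T) 0 0 = \sum_i (v 0 i * v 0 i).
Proof. rewrite mxE; apply: eq_bigr => i _; rewrite mxE //. Qed.

Lemma rV_nz (k : nat) (v : 'rV[R]_k) : v != 0 -> exists i, v 0 i <> 0.
Proof.
move=> hv; apply: NNPP => hno; move/eqP: hv; apply.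
apply/matrixP => i l; rewrite (ord1 i) mxE; apply: NNPP => h; apply: hno; by exists l.
Qed.

Lemma sq_sum_pos (k : nat) (v : 'rV[R]_k) : v != 0 -> Rlt 0 (\sum_i (v 0 i * v 0 i)).
Proof.
move=> /rV_nz [i hi].
apply: (Rlt_le_trans _ (v 0 i * v 0 i)).
- exact: (Rsqr_pos_lt _ hi).
- apply: (sumR_ge_term _ (fun l => v 0 l * v 0 l) i).
  move=> l; exact: Rle_0_sqr.
Qed.

Lemma det_rank1 k (x y : 'cV[R]_k) : \det (1%:M + x *m y^T) = 1 + (y^T *m x) 0 0.
Proof.
pose P := block_mx (1%:M : 'M_k) x (- y^T) (1%:M : 'M_1).
have e1 : block_mx 1%:M 0 (- y^T) 1%:M *m block_mx 1%:M x 0 (1%:M + y^T *m x) = P.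
  rewrite mulmx_block !mul1mx !mul0mx !mulmx1 ?mulmx0 !addr0.
  by rewrite mulNmx addrCA addNr addr0.
have e2 : block_mx (1%:M + x *m y^T) x 0 1%:M *m block_mx 1%:M 0 (- y^T) 1%:M = P.
  rewrite mulmx_block !mul1mx !mul0mx ?mulmx0 !mulmx1 ?addr0 ?add0r.
  by rewrite mulmxN addrK.
have := congr1 determinant e1; rewrite -e2 !det_mulmx det_lblock det_ublock.
rewrite !det1 !mul1r mulr1 det_ublock det1 mulr1 => <-.
by rewrite det_mx11 !mxE.
Qed.

Lemma det_update k (M : 'M[R]_k) (x y : 'cV[R]_k) : M \in unitmx ->
  \det (M + x *m y^T) = \det M * (1 + (y^T *m invmx M *m x) 0 0).
Proof.
move=> hM.
have -> : M + x *m y^T = M *m (1%:M + (invmx M *m x) *m y^T).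
  by rewrite mulmxDr mulmx1 !mulmxA mulmxV // mul1mx.
by rewrite det_mulmx det_rank1 mulmxA.
Qed.

Lemma pos3 (x y : R) : x <> R0 -> Rlt R0 y -> Rlt R0 (Rmult (Rmult x y) x).
Proof. move=> hx hy; have := Rsqr_pos_lt _ hx; rewrite /Rsqr; nra. Qed.
Lemma nneg3 (x y : R) : Rlt R0 y -> Rle R0 (Rmult (Rmult x y) x).
Proof. move=> hy; have := Rle_0_sqr x; rewrite /Rsqr; nra. Qed.

Lemma Bsym n m (A : 'M[R]_(n,m)) d : (Bm A d)^T = Bm A d.
Proof. by rewrite /Bm !trmx_mul trmxK /Dm tr_diag_mx mulmxA. Qed.

Lemma Dm_lin m (x : 'cV[R]_m) (s c : R) j :
  Dm (s *: (x + c *: delta_mx j 0)) = s *: (Dm x + c *: delta_mx j j).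
Proof.
apply/matrixP => a b; rewrite /Dm !mxE.
case: (a =P b) => [<-|ne] /=.
  by rewrite andbb eqxx andbT !mulr1n.
case: (a =P j) => [ea|_]; case: (b =P j) => [eb|_] /=.
- by exfalso; apply: ne; rewrite ea eb.
- by rewrite !mulr0n mulr0 addr0 mulr0.
- by rewrite !mulr0n mulr0 addr0 mulr0.
- by rewrite !mulr0n mulr0 addr0 mulr0.
Qed.

Lemma Bm_lin n m (A : 'M[R]_(n,m)) (x : 'cV[R]_m) (s c : R) j :
  Bm A (s *: (x + c *: delta_mx j 0)) = s *: (Bm A x + c *: (col j A *m (col j A)^T)).
Proof.
rewrite /Bm Dm_lin -scalemxAr -scalemxAl mulmxDr mulmxDl -scalemxAr -scalemxAl.
congr (_ *: (_ + _ *: _)).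
rewrite colE trmx_mul trmx_delta -(mul_delta_mx (0 : 'I_1)) !mulmxA //.
Qed.


Lemma qf_pos n m (A : 'M[R]_(n,m)) (d : 'cV[R]_m)
  (Hspan : forall x : 'cV[R]_n, exists lam : 'cV[R]_m,
             (forall i : 'I_m, Rle 0 (lam i 0)) /\ A *m lam = x)
  (Hd : forall i : 'I_m, Rlt 0 (d i 0)) (v : 'rV[R]_n) :
  v != 0 -> Rlt 0 ((v *m Bm A d *m v^T) 0 0).
Proof.
move=> hv.
have -> : v *m Bm A d *m v^T = (v *m A) *m Dm d *m (v *m A)^T.
  by rewrite /Bm trmx_mul !mulmxA.
rewrite /Dm qf_diag.
set w := v *m A.
case: (classic (exists k, w 0 k <> 0)) => [[k hk]|hno].
  apply: (Rlt_le_trans _ (w 0 k * d k 0 * w 0 k)).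
    exact: pos3 hk (Hd k).
  apply: (sumR_ge_term _ (fun l => w 0 l * d l 0 * w 0 l) k) => l.
  exact: nneg3 (Hd l).
have w0 : w = 0.
  apply/matrixP => i k; rewrite (ord1 i); apply: NNPP => h; apply: hno; exists k => e.
  by apply: h; rewrite e mxE.
have [lam [_ hl]] := Hspan v^T.
have : (v *m v^T) 0 0 = 0 by rewrite -hl mulmxA -/w w0 mul0mx mxE.
rewrite vvT => h0; have := @sq_sum_pos _ v hv; rewrite h0 => h; exfalso; exact: (Rlt_irrefl R0 h).
Qed.

Lemma B_unit n m (A : 'M[R]_(n,m)) (d : 'cV[R]_m)
  (Hspan : forall x : 'cV[R]_n, exists lam : 'cV[R]_m,
             (forall i : 'I_m, Rle 0 (lam i 0)) /\ A *m lam = x)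
  (Hd : forall i : 'I_m, Rlt 0 (d i 0)) : Bm A d \in unitmx.
Proof.
rewrite -row_free_unit; apply: inj_row_free => v hv.
apply/eqP; apply/negPn/negP => hnz.
have := @qf_pos _ _ A d Hspan Hd v hnz; rewrite hv mul0mx mxE => h; exact: (Rlt_irrefl R0 h).
Qed.

Lemma q_pos n m (A : 'M[R]_(n,m)) (d : 'cV[R]_m)
  (Hspan : forall x : 'cV[R]_n, exists lam : 'cV[R]_m,
             (forall i : 'I_m, Rle 0 (lam i 0)) /\ A *m lam = x)
  (Hd : forall i : 'I_m, Rlt 0 (d i 0)) (j : 'I_m)
  (Hcolj : \sum_(i < n) A i j ^+ 2 = 1) :
  Rlt 0 (((col j A)^T *m invmx (Bm A d) *m col j A) 0 0).
Proof.
have hB := @B_unit _ _ A d Hspan Hd.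
set a := col j A; set z := a^T *m invmx (Bm A d).
have az : a^T = z *m Bm A d by rewrite /z mulmxKV.
have aeq : a = Bm A d *m z^T by rewrite -[a]trmxK az trmx_mul Bsym.
have -> : (a^T *m invmx (Bm A d) *m a) = z *m Bm A d *m z^T.
  by rewrite -/z {1}aeq mulmxA.
apply: qf_pos => //.
apply/eqP => hz.
have a0 : a = 0 by rewrite aeq hz trmx0 mulmx0.
move: Hcolj; rewrite big1.
  by move=> h; apply: R1_neq_R0; exact: (esym h).
move=> i _; have : a i 0 = 0 by rewrite a0 mxE.
by rewrite /a mxE => ->; rewrite expr2 mulr0.
Qed.

Lemma Dm_scale m (x : 'cV[R]_m) (k : R) : Dm (k *: x) = k *: Dm x.
Proof.
apply/matrixP => a b; rewrite /Dm !mxE.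
case: (a =P b) => _ /=; by rewrite ?mulr1n ?mulr0n ?mulr0.
Qed.

Lemma Bm_scale n m (A : 'M[R]_(n,m)) (x : 'cV[R]_m) (k : R) : Bm A (k *: x) = k *: Bm A x.
Proof. by rewrite /Bm Dm_scale -scalemxAr -scalemxAl. Qed.

Lemma natRE k : (k%:R : R) = INR k.
Proof. elim: k => [//|k IH]; rewrite mulrS IH S_INR addRE oneRE Rplus_comm; reflexivity. Qed.
Lemma expRE (x : R) k : (x ^+ k) = pow x k.
Proof. elim: k => [//|k IH]; rewrite exprS IH //. Qed.

Theorem lemma10 (n m : nat) (A : 'M[R]_(n, m)) (u : 'cV[R]_m)
  (Hn : (0 < n)%N) (Hnm : (n < m)%N)
  (Hcol : forall j : 'I_m, \sum_(i < n) A i j ^+ 2 = 1)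
  (Hspan : forall x : 'cV[R]_n, exists lam : 'cV[R]_m,
             (forall i : 'I_m, Rle 0 (lam i 0)) /\ A *m lam = x)
  (d dt l lt : 'cV[R]_m)
  (Hd : forall i : 'I_m, Rlt 0 (d i 0))
  (Hdt : forall i : 'I_m, Rlt 0 (dt i 0))
  (Hf : Rlt 0 (ff A u d l)) (Hft : Rlt 0 (ff A u dt lt))
  (j : 'I_m) (alpha : R)
  (Halpha : Rle ((m%:R ^+ 2 - 1) / m%:R ^+ 2) alpha)
  (Hrel : (ff A u dt lt)^-1 *: dt =
          alpha *: ((ff A u d l)^-1 *: d
                    + (2 / (m%:R - 1) / (gam A u d l j) ^+ 2) *: delta_mx j 0)) :
  Rle (volE A u dt lt) (exp (- (2 * (m%:R + 1))^-1) * volE A u d l).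
Proof.
have hB := @B_unit _ _ A d Hspan Hd.
have hq := @q_pos _ _ A d Hspan Hd j (Hcol j).
set f := ff A u d l in Hf Hrel *.
set ft := ff A u dt lt in Hft Hrel *.
set B := Bm A d in hB hq *.
set a := col j A in hq *.
set q := ((a^T *m invmx B *m a) 0 0) in hq *.
have hg2 : (gam A u d l j) ^+ 2 = f * q.
  rewrite /gam expr2; apply: sqrt_sqrt; apply: Rlt_le; exact: Rmult_lt_0_compat.
set c := 2 / (m%:R - 1) / (gam A u d l j) ^+ 2 in Hrel.
have hft0 : ft != 0 by apply/eqP; exact: (Rgt_not_eq _ _ Hft).
have hf0 : f != 0 by apply/eqP; exact: (Rgt_not_eq _ _ Hf).
have hq0 : q != 0 by apply/eqP; exact: (Rgt_not_eq _ _ hq).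
have hdt : dt = (ft * alpha) *: (f^-1 *: d + c *: delta_mx j 0).
  by rewrite -scalerA -Hrel scalerA mulfV // scale1r.
have hBt : Bm A dt = (ft * alpha * f^-1) *: (B + ((f * c) *: a) *m a^T).
  rewrite hdt Bm_lin Bm_scale -/B -/a -scalemxAl !scalerDr !scalerA.
  congr (_ *: _ + _ *: _); by field.
have hdet : \det (Bm A dt) = (ft * alpha * f^-1) ^+ n * (\det B * (1 + f * c * q)).
  rewrite hBt detZ det_update // -scalemxAr mxE -/q; done.
have hm2 : Rle (INR 2) (INR m).
  apply: le_INR; apply/leP; exact: (leq_ltn_trans Hn Hnm).
simpl in hm2.
have hm1 : (m%:R - 1 : R) != 0.
  apply/eqP; rewrite natRE => e.
  have e' : Rplus (INR m) (Ropp R1) = R0 by exact: e.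
  lra.
rewrite /volE (natRE m).
apply: (final_real n m alpha f ft (\det B) (\det (Bm A dt))).
- by apply/ltP.
- by apply/ltP.
- by move: Halpha; rewrite natRE expRE.
- exact: Hf.
- exact: Hft.
have key : 1 + f * c * q = (m%:R + 1) / (m%:R - 1).
  rewrite /c hg2; field; apply/and3P; split => //.
rewrite hdet key /Rdiv /Rminus -!expRE -!invRE -!oppRE -!mulRE -!addRE -!oneRE -(natRE m).
rewrite exprMn -mulrA; congr (_ * _); rewrite mulrC; reflexivity.
Qed.
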